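(* Let $\Omega$ be a non-empty bounded open subset of $\mathbf{R}^2$ and let $\beta:\Omega\to\mathbf{R}$ be a $C^1$ function. Assume there exists a $C^1$ function $\alpha:\Omega\to\mathbf{R}$ such that $\alpha_x\beta_y-\alpha_y\beta_x$ vanishes at no point of $\Omega$. Then for any $u\in C^1(\Omega)\cap C^0(\overline{\Omega})$ satisfying $\beta_yu_x-\beta_xu_y=0$ in $\Omega$, one has $\sup_\Omega u=\sup_{\partial\Omega}u$ and $\inf_\Omega u=\inf_{\partial\Omega}u$. *)

(* Defs.v *)
From Stdlib Require Import Reals.
From Coquelicot Require Import Coquelicot.
Open Scope R_scope.

Definition dist2 (p q : R * R) : R :=
  sqrt ((fst p - fst q) ^ 2 + (snd p - snd q) ^ 2).

Definition is_open2 (O : R * R -> Prop) : Prop :=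
  forall p, O p -> exists eps, 0 < eps /\ forall q, dist2 p q < eps -> O q.

Definition bounded2 (O : R * R -> Prop) : Prop :=
  exists M, forall p, O p -> dist2 p (0, 0) <= M.

Definition nonempty2 (O : R * R -> Prop) : Prop := exists p, O p.

Definition closure2 (O : R * R -> Prop) (p : R * R) : Prop :=
  forall eps, 0 < eps -> exists q, O q /\ dist2 p q < eps.

Definition boundary2 (O : R * R -> Prop) (p : R * R) : Prop :=
  closure2 O p /\ ~ O p.

Definition cont2_at (f : R * R -> R) (p : R * R) : Prop :=
  forall eps, 0 < eps -> exists delta, 0 < delta /\
    forall q, dist2 p q < delta -> Rabs (f q - f p) < eps.

Definition cont2_on (A : R * R -> Prop) (f : R * R -> R) : Prop :=
  forall p, A p -> forall eps, 0 < eps -> exists delta, 0 < delta /\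
    forall q, A q -> dist2 p q < delta -> Rabs (f q - f p) < eps.

Definition dx (f : R * R -> R) (p : R * R) : R :=
  Derive (fun t => f (t, snd p)) (fst p).
Definition dy (f : R * R -> R) (p : R * R) : R :=
  Derive (fun t => f (fst p, t)) (snd p).

Definition C1_on (O : R * R -> Prop) (f : R * R -> R) : Prop :=
  forall p, O p ->
    ex_derive (fun t => f (t, snd p)) (fst p) /\
    ex_derive (fun t => f (fst p, t)) (snd p) /\
    cont2_at (dx f) p /\ cont2_at (dy f) p.

Definition image2 (A : R * R -> Prop) (u : R * R -> R) (r : R) : Prop :=
  exists p, A p /\ r = u p.

(* Main.v *)
Require Import Defs.
From Stdlib Require Import Reals.
From Coquelicot Require Import Coquelicot.
From Stdlib Require Import Lra List ClassicalEpsilon Classical FunctionalExtensionality PropExtensionality.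
Open Scope R_scope.

Lemma sq_abs (a : R) : Rabs a * Rabs a = a * a.
Proof. rewrite <- Rabs_mult. apply Rabs_pos_eq. nra. Qed.

Lemma dist2_ge1 p q : Rabs (fst p - fst q) <= dist2 p q.
Proof.
  unfold dist2. rewrite <- (sqrt_square (Rabs _)) by apply Rabs_pos.
  apply sqrt_le_1_alt. rewrite sq_abs. pose proof (pow2_ge_0 (fst p - fst q)); pose proof (pow2_ge_0 (snd p - snd q)). simpl in *. nra.
Qed.

Lemma dist2_ge2 p q : Rabs (snd p - snd q) <= dist2 p q.
Proof.
  unfold dist2. rewrite <- (sqrt_square (Rabs _)) by apply Rabs_pos.
  apply sqrt_le_1_alt. rewrite sq_abs. pose proof (pow2_ge_0 (fst p - fst q)); pose proof (pow2_ge_0 (snd p - snd q)). simpl in *. nra.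
Qed.

Lemma dist2_le p q : dist2 p q <= Rabs (fst p - fst q) + Rabs (snd p - snd q).
Proof.
  unfold dist2. rewrite <- (sqrt_square (Rabs _ + Rabs _)).
  2:{ pose proof (Rabs_pos (fst p - fst q)); pose proof (Rabs_pos (snd p - snd q)); lra. }
  apply sqrt_le_1_alt.
  pose proof (sq_abs (fst p - fst q)); pose proof (sq_abs (snd p - snd q)).
  pose proof (Rabs_pos (fst p - fst q)); pose proof (Rabs_pos (snd p - snd q)).
  simpl. nra.
Qed.

Lemma dist2_refl p : dist2 p p = 0.
Proof. unfold dist2. replace ((fst p - fst p) ^ 2 + (snd p - snd p) ^ 2) with 0 by ring. apply sqrt_0. Qed.

Definition pt (p : R * R) : Compactness.Tn 2 R := (fst p, (snd p, tt)).
Definition tp (z : Compactness.Tn 2 R) : R * R := (fst z, fst (snd z)).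

Lemma list_max (K : R * R -> Prop) (c : R * R -> R) (l : list (R * R)) :
  (exists t, In t l /\ K t) ->
  exists t, In t l /\ K t /\ forall t', In t' l -> K t' -> c t' <= c t.
Proof.
  induction l as [|a l IH]; intros [t [Ht Kt]]; [destruct Ht|].
  destruct (classic (exists t, In t l /\ K t)) as [He|He].
  - destruct (IH He) as [m [Hm [Km Hmax]]].
    destruct (classic (K a)) as [Ka|Ka].
    + destruct (Rle_dec (c a) (c m)).
      * exists m; split; [right; exact Hm|split; [exact Km|]].
        intros t' [<-|H'] Kt'; [lra|apply Hmax; auto].
      * exists a; split; [left; reflexivity|split; [exact Ka|]].
        intros t' [<-|H'] Kt'; [lra|]. specialize (Hmax t' H' Kt'); lra.
    + exists m; split; [right; exact Hm|split; [exact Km|]].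
      intros t' [<-|H'] Kt'; [contradiction|apply Hmax; auto].
  - destruct Ht as [<-|Ht]; [|exfalso; apply He; eauto].
    exists a; split; [left; reflexivity|split; [exact Kt|]].
    intros t' [<-|H'] Kt'; [lra|exfalso; apply He; eauto].
Qed.

Lemma cover (K : R * R -> Prop) (f c : R * R -> R) (M : R) :
  (forall p, K p -> Rabs (fst p) <= M /\ Rabs (snd p) <= M) ->
  (forall z, K z -> exists d, 0 < d /\ forall q, K q -> dist2 z q < d -> f q <= c z) ->
  (forall z, ~ K z -> exists d, 0 < d /\ forall q, K q -> dist2 z q < d -> False) ->
  (exists p, K p) ->
  exists t, K t /\ forall q, K q -> f q <= c t.
Proof.
  intros HM Hin Hout [p0 Kp0].
  assert (Hd : forall z : Compactness.Tn 2 R, exists d : posreal,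
     (K (tp z) -> forall q, K q -> dist2 (tp z) q < d -> f q <= c (tp z)) /\
     (~ K (tp z) -> forall q, K q -> dist2 (tp z) q < d -> False)).
  { intros z. destruct (classic (K (tp z))) as [Kz|Kz].
    - destruct (Hin _ Kz) as [d [Hd H]]. exists (mkposreal d Hd); split; auto; tauto.
    - destruct (Hout _ Kz) as [d [Hd H]]. exists (mkposreal d Hd); split; auto; tauto. }
  set (delta := fun z => proj1_sig (constructive_indefinite_description _ (Hd z))).
  assert (Hdelta : forall z, (K (tp z) -> forall q, K q -> dist2 (tp z) q < 2 * pos_div_2 (delta z) -> f q <= c (tp z)) /\
     (~ K (tp z) -> forall q, K q -> dist2 (tp z) q < 2 * pos_div_2 (delta z) -> False)).
  { intros z. unfold delta. destruct (constructive_indefinite_description _ (Hd z)) as [d Hdz]. simpl.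
    replace (2 * (d / 2)) with (pos d) by field. exact Hdz. }
  apply NNPP; intro Hneg.
  apply (compactness_list 2 (-M, (-M, tt)) (M, (M, tt)) (fun z => pos_div_2 (delta z))).
  intros [l Hl].
  pose (l' := map tp l).
  assert (Hcov : forall q, K q -> exists t, In t l' /\ K t /\ f q <= c t).
  { intros q Kq. destruct (HM q Kq) as [H1 H2].
    destruct (Hl (pt q)) as [t [Ht [_ Hc]]].
    { simpl. apply Rabs_le_between in H1; apply Rabs_le_between in H2. tauto. }
    destruct t as [t1 [t2 []]]. destruct q as [q1 q2]. simpl in Hc.
    destruct Hc as [Hc1 [Hc2 _]].
    assert (Hdist : dist2 (tp (t1, (t2, tt))) (q1, q2) < 2 * pos_div_2 (delta (t1, (t2, tt)))).
    { eapply Rle_lt_trans; [apply dist2_le|]. simpl.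
      simpl in Hc1, Hc2. rewrite Rabs_minus_sym in Hc1. rewrite Rabs_minus_sym in Hc2. lra. }
    destruct (Hdelta (t1, (t2, tt))) as [Hi Ho].
    destruct (classic (K (tp (t1, (t2, tt))))) as [Kt|Kt].
    - exists (tp (t1, (t2, tt))); split; [apply in_map; exact Ht|split; [exact Kt|]].
      apply (Hi Kt); assumption.
    - exfalso; eapply Ho; eauto. }
  destruct (list_max K c l') as [m [Hm [Km Hmax]]].
  { destruct (Hcov p0 Kp0) as [t [? [? _]]]; eauto. }
  apply Hneg. exists m; split; [exact Km|].
  intros q Kq. destruct (Hcov q Kq) as [t [Ht [Kt Hq]]].
  specialize (Hmax t Ht Kt). lra.
Qed.

Lemma attain (K : R * R -> Prop) (f : R * R -> R) (M : R) :
  (forall p, K p -> Rabs (fst p) <= M /\ Rabs (snd p) <= M) ->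
  (forall z, K z -> forall e, 0 < e -> exists d, 0 < d /\
      forall q, K q -> dist2 z q < d -> f q < f z + e) ->
  (forall z, ~ K z -> exists d, 0 < d /\ forall q, K q -> dist2 z q < d -> False) ->
  (exists p, K p) ->
  exists p, K p /\ forall q, K q -> f q <= f p.
Proof.
  intros HM Hc Hout Hne.
  destruct (cover K f (fun z => f z + 1) M HM) as [t0 [Kt0 Hb]]; auto.
  { intros z Kz. destruct (Hc z Kz 1 Rlt_0_1) as [d [Hd H]]. exists d; split; auto.
    intros q Kq Hq; specialize (H q Kq Hq); lra. }
  set (E := fun r => exists q, K q /\ r = f q).
  destruct (completeness E) as [S [HS1 HS2]].
  { exists (f t0 + 1). intros r [q [Kq ->]]. auto. }
  { destruct Hne as [p Kp]. exists (f p). exists p; auto. }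
  apply NNPP; intro Hneg.
  assert (Hlt : forall p, K p -> f p < S).
  { intros p Kp. assert (f p <= S) by (apply HS1; exists p; auto).
    destruct (Rle_lt_or_eq_dec _ _ H) as [H'|H']; auto.
    exfalso; apply Hneg; exists p; split; auto. intros q Kq.
    rewrite H'. apply HS1. exists q; auto. }
  destruct (cover K f (fun z => (f z + S) / 2) M HM) as [t [Kt Ht]]; auto.
  { intros z Kz. specialize (Hlt z Kz).
    destruct (Hc z Kz ((S - f z) / 2)) as [d [Hd H]]; [lra|]. exists d; split; auto.
    intros q Kq Hq; specialize (H q Kq Hq); lra. }
  specialize (Hlt t Kt).
  assert (S <= (f t + S) / 2). { apply HS2. intros r [q [Kq ->]]. auto. }
  lra.
Qed.

Lemma cont1 (g : R -> R) x : ex_derive g x -> forall e, 0 < e ->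
  exists d, 0 < d /\ forall y, Rabs (y - x) < d -> Rabs (g y - g x) < e.
Proof.
  intros Hg e He. pose proof (derivable_continuous_pt _ _ (ex_derive_Reals_0 _ _ Hg)) as Hc.
  destruct (Hc e He) as [d [Hd H]]. exists d; split; auto.
  intros y Hy. destruct (Req_dec y x) as [->|Hne].
  - rewrite Rminus_diag, Rabs_R0; auto.
  - apply (H y). split; [split; [exact I|intro E; apply Hne; symmetry; exact E]|exact Hy].
Qed.

Lemma C1_cont (O : R * R -> Prop) (f : R * R -> R) p :
  is_open2 O -> C1_on O f -> O p -> cont2_at f p.
Proof.
  intros HO Hf Op e He.
  destruct (HO p Op) as [e0 [He0 Hball]].
  destruct (Hf p Op) as [_ [Hy [Hdx _]]].
  destruct (Hdx 1 Rlt_0_1) as [d1 [Hd1 Hdx1]].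
  set (B := Rabs (dx f p) + 1).
  assert (HB : 0 < B) by (unfold B; pose proof (Rabs_pos (dx f p)); lra).
  destruct (cont1 _ _ Hy (e/2)) as [a [Ha Hya]]; [lra|].
  exists (Rmin (Rmin (Rmin e0 d1 / 2) (e / (2 * B))) a).
  split. { assert (0 < Rmin e0 d1) by (apply Rmin_pos; lra).
    assert (0 < e / (2 * B)) by (apply Rdiv_lt_0_compat; lra).
    repeat apply Rmin_pos; lra. }
  intros q Hq.
  assert (Hq1 : dist2 p q < Rmin e0 d1 / 2) by (eapply Rlt_le_trans; [exact Hq|]; repeat (eapply Rle_trans; [apply Rmin_l|]); lra).
  assert (Hq2 : dist2 p q < e / (2 * B)) by (eapply Rlt_le_trans; [exact Hq|]; eapply Rle_trans; [apply Rmin_l|]; apply Rmin_r).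
  assert (Hq3 : dist2 p q < a) by (eapply Rlt_le_trans; [exact Hq|]; apply Rmin_r).
  pose proof (dist2_ge1 p q) as G1. pose proof (dist2_ge2 p q) as G2.
  pose proof (Rmin_l e0 d1). pose proof (Rmin_r e0 d1).
  assert (Hseg : forall t, Rmin (fst p) (fst q) <= t <= Rmax (fst p) (fst q) ->
     O (t, snd q) /\ Rabs (dx f (t, snd q)) <= B).
  { intros t Ht.
    assert (Hd : dist2 p (t, snd q) < Rmin e0 d1).
    { eapply Rle_lt_trans; [apply dist2_le|]. simpl.
      assert (Rabs (fst p - t) <= Rabs (fst p - fst q)).
      { unfold Rmin, Rmax in Ht. destruct (Rle_dec (fst p) (fst q));
        unfold Rabs; repeat destruct Rcase_abs; lra. }
      lra. }
    split. { apply Hball. lra. }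
    specialize (Hdx1 _ (Rlt_le_trans _ _ _ Hd (Rmin_r _ _))).
    unfold B. pose proof (Rabs_triang_inv (dx f (t, snd q)) (dx f p)). lra. }
  destruct (MVT_gen (fun t => f (t, snd q)) (fst p) (fst q) (fun t => dx f (t, snd q))) as [c [Hc Hmvt]].
  { intros t Ht. destruct (Hseg t (conj (Rlt_le _ _ (proj1 Ht)) (Rlt_le _ _ (proj2 Ht)))) as [Ot _].
    destruct (Hf _ Ot) as [Hex _]. simpl in Hex. unfold dx; simpl. apply Derive_correct. exact Hex. }
  { intros t Ht. destruct (Hseg t Ht) as [Ot _].
    destruct (Hf _ Ot) as [Hex _]. simpl in Hex.
    exact (derivable_continuous_pt _ _ (ex_derive_Reals_0 _ _ Hex)). }
  destruct (Hseg c Hc) as [_ Hbc].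
  assert (E1 : Rabs (f (fst q, snd q) - f (fst p, snd q)) <= B * dist2 p q).
  { rewrite Hmvt, Rabs_mult. rewrite Rabs_minus_sym in G1.
    apply Rmult_le_compat; auto using Rabs_pos. }
  assert (E2 : Rabs (f (fst p, snd q) - f (fst p, snd p)) < e / 2).
  { apply Hya. rewrite Rabs_minus_sym. lra. }
  assert (E3 : B * dist2 p q <= e / 2).
  { assert (B * dist2 p q <= B * (e / (2 * B))) by (apply Rmult_le_compat_l; lra).
    replace (B * (e / (2 * B))) with (e/2) in H1 by (field; lra). lra. }
  destruct q as [q1 q2]; destruct p as [p1 p2]; simpl in *.
  replace (f (q1, q2) - f (p1, p2)) with ((f (q1, q2) - f (p1, q2)) + (f (p1, q2) - f (p1, p2))) by ring.
  eapply Rle_lt_trans; [apply Rabs_triang|]. lra.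
Qed.

Lemma deriv_max (g : R -> R) x l d : is_derive g x l -> 0 < d ->
  (forall t, Rabs (t - x) < d -> g t <= g x) -> l = 0.
Proof.
  intros Hg Hd Hm. apply is_derive_Reals in Hg.
  pose (pr := exist (fun l => derivable_pt_lim g x l) l Hg : derivable_pt g x).
  change (derive_pt g x pr = 0).
  apply (deriv_maximum g (x - d) (x + d)); try lra.
  intros t H1 H2. apply Hm. unfold Rabs; destruct Rcase_abs; lra.
Qed.

Lemma triang3 (a b c d : R) : Rabs (a - c) <= Rabs (a - b) + Rabs (b - c).
Proof. replace (a - c) with ((a - b) + (b - c)) by ring. apply Rabs_triang. Qed.

Lemma core2 (Om : R * R -> Prop) (beta alpha u : R * R -> R) :
  bounded2 Om -> is_open2 Om -> C1_on Om alpha ->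
  (forall p, Om p -> dx alpha p * dy beta p - dy alpha p * dx beta p <> 0) ->
  (forall p, Om p -> ex_derive (fun t => u (t, snd p)) (fst p) /\
                     ex_derive (fun t => u (fst p, t)) (snd p)) ->
  cont2_on (closure2 Om) u ->
  (forall p, Om p -> dy beta p * dx u p - dx beta p * dy u p = 0) ->
  forall q0 c', Om q0 -> c' < u q0 -> (forall b, boundary2 Om b -> u b < c') -> False.
Proof.
  intros [M0 HM0] HO Ha Hab Hu Hc Hpde q0 c' Oq0 Hq0 Hbd.
  set (K := fun p => closure2 Om p /\ c' <= u p).
  assert (Kb : forall p, K p -> Rabs (fst p) <= M0 + 1 /\ Rabs (snd p) <= M0 + 1).
  { intros p [Cp _]. destruct (Cp 1 Rlt_0_1) as [r [Or Hr]].
    specialize (HM0 r Or). pose proof (dist2_ge1 p r). pose proof (dist2_ge2 p r).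
    pose proof (dist2_ge1 r (0,0)). pose proof (dist2_ge2 r (0,0)). simpl in *.
    rewrite Rminus_0_r in *.
    pose proof (triang3 (fst p) (fst r) 0 0). pose proof (triang3 (snd p) (snd r) 0 0).
    rewrite !Rminus_0_r in *. split; lra. }
  assert (KO : forall p, K p -> Om p).
  { intros p [Cp Hp]. apply NNPP; intro Np. specialize (Hbd p (conj Cp Np)). lra. }
  assert (Kcl : forall z, ~ K z -> exists d, 0 < d /\ forall q, K q -> dist2 z q < d -> False).
  { intros z Nz. destruct (classic (closure2 Om z)) as [Cz|Cz].
    - assert (Huz : u z < c') by (apply Rnot_le_lt; intro; apply Nz; split; auto).
      destruct (Hc z Cz (c' - u z)) as [d [Hd H]]; [lra|].
      exists d; split; auto. intros q [Cq Hq] Hzq. specialize (H q Cq Hzq).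
      apply Rabs_def2 in H. lra.
    - unfold closure2 in Cz. apply not_all_ex_not in Cz. destruct Cz as [eps Heps].
      apply imply_to_and in Heps. destruct Heps as [Heps Hn].
      exists (eps / 4); split; [lra|]. intros q [Cq _] Hzq.
      destruct (Cq (eps/4)) as [r [Or Hr]]; [lra|]. apply Hn. exists r; split; auto.
      eapply Rle_lt_trans; [apply dist2_le|].
      pose proof (dist2_ge1 z q). pose proof (dist2_ge2 z q).
      pose proof (dist2_ge1 q r). pose proof (dist2_ge2 q r).
      pose proof (triang3 (fst z) (fst q) (fst r) 0). pose proof (triang3 (snd z) (snd q) (snd r) 0).
      lra. }
  assert (Kq0 : K q0).
  { split; [|lra]. intros e He. exists q0; split; auto. rewrite dist2_refl; auto. }
  destruct (attain K (fun p => Rabs (alpha p)) (M0 + 1) Kb) as [t [Kt HA]]; auto.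
  { intros z Kz e He. destruct (C1_cont Om alpha z HO Ha (KO z Kz) e He) as [d [Hd H]].
    exists d; split; auto. intros q Kq Hzq. specialize (H q Hzq).
    pose proof (Rabs_triang_inv (alpha q) (alpha z)). lra. }
  { exists q0; auto. }
  set (A := Rabs (alpha t)).
  assert (HA0 : 0 <= A) by apply Rabs_pos.
  set (eps := (u q0 - c') / (4 * (A + 1))).
  assert (Heps : 0 < eps) by (apply Rdiv_lt_0_compat; lra).
  assert (HepsA : eps * A < (u q0 - c') / 4).
  { unfold eps. apply (Rmult_lt_reg_r (4 * (A + 1))); [lra|].
    field_simplify; [|lra]. nra. }
  destruct (attain K (fun p => u p + eps * alpha p) (M0 + 1) Kb) as [p [Kp Hmax]]; auto.
  { intros z Kz e He.
    destruct (Hc z (proj1 Kz) (e/2)) as [d1 [Hd1 H1]]; [lra|].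
    destruct (C1_cont Om alpha z HO Ha (KO z Kz) (e / (2 * eps))) as [d2 [Hd2 H2]].
    { apply Rdiv_lt_0_compat; lra. }
    exists (Rmin d1 d2); split; [apply Rmin_pos; auto|].
    intros q Kq Hzq.
    specialize (H1 q (proj1 Kq) (Rlt_le_trans _ _ _ Hzq (Rmin_l _ _))).
    specialize (H2 q (Rlt_le_trans _ _ _ Hzq (Rmin_r _ _))).
    apply Rabs_def2 in H1. apply Rabs_def2 in H2.
    assert (eps * (alpha q - alpha z) < eps * (e / (2 * eps))) by (apply Rmult_lt_compat_l; lra).
    replace (eps * (e / (2 * eps))) with (e / 2) in H by (field; lra).
    lra. }
  { exists q0; auto. }
  assert (Hup : c' < u p).
  { specialize (Hmax q0 Kq0). pose proof (HA p Kp). pose proof (HA q0 Kq0).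
    fold A in H, H0. apply Rabs_le_between in H. apply Rabs_le_between in H0.
    assert (eps * alpha p <= eps * A) by (apply Rmult_le_compat_l; lra).
    assert (eps * - A <= eps * alpha q0) by (apply Rmult_le_compat_l; lra).
    lra. }
  pose proof (KO p Kp) as Op.
  destruct (HO p Op) as [e0 [He0 Hball]].
  destruct (Hc p (proj1 Kp) (u p - c')) as [d1 [Hd1 H1]]; [lra|].
  set (d := Rmin e0 d1).
  assert (Hd : 0 < d) by (apply Rmin_pos; auto).
  assert (Hloc : forall q, dist2 p q < d -> u q + eps * alpha q <= u p + eps * alpha p).
  { intros q Hq. apply Hmax.
    assert (Oq : Om q) by (apply Hball; eapply Rlt_le_trans; [exact Hq|apply Rmin_l]).
    assert (Cq : closure2 Om q) by (intros e He; exists q; split; auto; rewrite dist2_refl; auto).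
    split; auto. specialize (H1 q Cq (Rlt_le_trans _ _ _ Hq (Rmin_r _ _))).
    apply Rabs_def2 in H1. lra. }
  destruct (Hu p Op) as [Hux Huy].
  destruct (Ha p Op) as [Hax [Hay _]].
  assert (Dx : dx u p + eps * dx alpha p = 0).
  { apply (deriv_max (fun t => u (t, snd p) + eps * alpha (t, snd p)) (fst p) _ d); auto.
    - apply (is_derive_plus (fun t => u (t, snd p)) (fun t => eps * alpha (t, snd p))).
      + apply Derive_correct; auto.
      + apply is_derive_scal. apply Derive_correct; auto.
    - intros s Hs. destruct p as [p1 p2]. simpl in *. apply (Hloc (s, p2)).
      eapply Rle_lt_trans; [apply dist2_le|]. simpl.
      rewrite Rminus_diag, Rabs_R0, Rabs_minus_sym. lra. }
  assert (Dy : dy u p + eps * dy alpha p = 0).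
  { apply (deriv_max (fun t => u (fst p, t) + eps * alpha (fst p, t)) (snd p) _ d); auto.
    - apply (is_derive_plus (fun t => u (fst p, t)) (fun t => eps * alpha (fst p, t))).
      + apply Derive_correct; auto.
      + apply is_derive_scal. apply Derive_correct; auto.
    - intros s Hs. destruct p as [p1 p2]. simpl in *. apply (Hloc (p1, s)).
      eapply Rle_lt_trans; [apply dist2_le|]. simpl.
      rewrite Rminus_diag, Rabs_R0, Rabs_minus_sym. lra. }
  apply (Hab p Op).
  specialize (Hpde p Op).
  replace (dx u p) with (- (eps * dx alpha p)) in Hpde by lra.
  replace (dy u p) with (- (eps * dy alpha p)) in Hpde by lra.
  assert (eps * (dx alpha p * dy beta p - dy alpha p * dx beta p) = 0).
  { transitivity (- (dy beta p * - (eps * dx alpha p) - dx beta p * - (eps * dy alpha p))); [ring|].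
    rewrite Hpde. ring. }
  apply Rmult_integral in H. destruct H; [lra|auto].
Qed.

Lemma core1 (Om : R * R -> Prop) (u : R * R -> R) b e :
  cont2_on (closure2 Om) u -> boundary2 Om b -> 0 < e ->
  exists q, Om q /\ Rabs (u q - u b) < e.
Proof.
  intros Hc [Cb _] He. destruct (Hc b Cb e He) as [d [Hd H]].
  destruct (Cb d Hd) as [q [Oq Hq]]. exists q; split; auto. apply H; auto.
  intros e' He'. exists q; split; auto. rewrite dist2_refl; auto.
Qed.

Lemma sup_part (Om : R * R -> Prop) (beta alpha u : R * R -> R) :
  nonempty2 Om -> bounded2 Om -> is_open2 Om -> C1_on Om alpha ->
  (forall p, Om p -> dx alpha p * dy beta p - dy alpha p * dx beta p <> 0) ->
  (forall p, Om p -> ex_derive (fun t => u (t, snd p)) (fst p) /\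
                     ex_derive (fun t => u (fst p, t)) (snd p)) ->
  cont2_on (closure2 Om) u ->
  (forall p, Om p -> dy beta p * dx u p - dx beta p * dy u p = 0) ->
  Lub_Rbar (image2 Om u) = Lub_Rbar (image2 (boundary2 Om) u).
Proof.
  intros [p0 Op0] Hb HO Ha Hab Hu Hc Hpde.
  destruct (Lub_Rbar_correct (image2 Om u)) as [HA1 HA2].
  destruct (Lub_Rbar_correct (image2 (boundary2 Om) u)) as [HB1 HB2].
  apply Rbar_le_antisym.
  - apply HA2. intros r [q [Oq ->]].
    destruct (Rbar_le_lt_dec (u q) (Lub_Rbar (image2 (boundary2 Om) u))) as [H|H]; auto.
    exfalso.
    assert (Hc' : exists c', c' < u q /\ forall b, boundary2 Om b -> u b < c').
    { destruct (Lub_Rbar (image2 (boundary2 Om) u)) as [L| |] eqn:EL; simpl in H.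
      - exists ((L + u q) / 2); split; [lra|]. intros b Bb.
        assert (Hle : Rbar_le (u b) (Finite L)) by (apply HB1; exists b; auto).
        simpl in Hle. lra.
      - contradiction.
      - exists (u q - 1); split; [lra|]. intros b Bb.
        assert (Hle : Rbar_le (u b) m_infty) by (apply HB1; exists b; auto).
        simpl in Hle. contradiction. }
    destruct Hc' as [c' [Hc1 Hc2]].
    exact (core2 Om beta alpha u Hb HO Ha Hab Hu Hc Hpde q c' Oq Hc1 Hc2).
  - apply HB2. intros r [b [Bb ->]].
    destruct (Lub_Rbar (image2 Om u)) as [L| |] eqn:EL.
    + simpl. apply Rnot_lt_le; intro Hlt.
      destruct (core1 Om u b (u b - L) Hc Bb) as [q [Oq Hq]]; [lra|].
      assert (Hle : Rbar_le (u q) (Finite L)) by (apply HA1; exists q; auto).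
      simpl in Hle. apply Rabs_def2 in Hq. lra.
    + simpl; auto.
    + assert (Hle : Rbar_le (u p0) m_infty) by (apply HA1; exists p0; auto).
      simpl in Hle. contradiction.
Qed.

Lemma image_opp A u : image2 A (fun p => - u p) = (fun r => image2 A u (- r)).
Proof.
  apply functional_extensionality; intro r. apply propositional_extensionality.
  split; intros [p [Ap Hp]]; exists p; split; auto; lra.
Qed.

Lemma glb_lub E : Glb_Rbar E = Rbar_opp (Lub_Rbar (fun r => E (- r))).
Proof.
  destruct (Glb_Rbar_correct E) as [G1 G2].
  destruct (Lub_Rbar_correct (fun r => E (- r))) as [L1 L2].
  apply Rbar_le_antisym.
  - assert (H : Rbar_le (Lub_Rbar (fun r => E (- r))) (Rbar_opp (Glb_Rbar E))).
    { apply L2. intros x Ex. specialize (G1 _ Ex).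
      destruct (Glb_Rbar E); simpl in *; auto; lra. }
    destruct (Lub_Rbar (fun r => E (- r))), (Glb_Rbar E); simpl in *; auto; lra.
  - apply G2. intros x Ex. rewrite <- (Ropp_involutive x) in Ex.
    specialize (L1 _ Ex). destruct (Lub_Rbar (fun r => E (- r))); simpl in *; auto; lra.
Qed.

Theorem theorem6 (Omega : R * R -> Prop) (beta : R * R -> R) :
  nonempty2 Omega -> bounded2 Omega -> is_open2 Omega ->
  C1_on Omega beta ->
  (exists alpha : R * R -> R, C1_on Omega alpha /\
     forall p, Omega p -> dx alpha p * dy beta p - dy alpha p * dx beta p <> 0) ->
  forall u : R * R -> R,
    C1_on Omega u -> cont2_on (closure2 Omega) u ->
    (forall p, Omega p -> dy beta p * dx u p - dx beta p * dy u p = 0) ->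
    Lub_Rbar (image2 Omega u) = Lub_Rbar (image2 (boundary2 Omega) u) /\
    Glb_Rbar (image2 Omega u) = Glb_Rbar (image2 (boundary2 Omega) u).
Proof.
  intros Hne Hb HO Hbeta [alpha [Ha Hab]] u Hu Hc Hpde. split.
  - apply (sup_part Omega beta alpha u); auto.
    intros p Op. destruct (Hu p Op) as [? [? _]]; auto.
  - rewrite !glb_lub, <- !image_opp. f_equal.
    apply (sup_part Omega beta alpha (fun p => - u p)); auto.
    + intros p Op. destruct (Hu p Op) as [H1 [H2 _]].
      split; [apply (ex_derive_opp (fun t => u (t, snd p)))|apply (ex_derive_opp (fun t => u (fst p, t)))]; auto.
    + intros p Cp e He. destruct (Hc p Cp e He) as [d [Hd H]]. exists d; split; auto.
      intros q Cq Hq. replace (- u q - - u p) with (- (u q - u p)) by ring.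
      rewrite Rabs_Ropp. auto.
    + intros p Op. specialize (Hpde p Op). unfold dx, dy in *. rewrite !Derive_opp.
      transitivity (- (dy beta p * Derive (fun t => u (t, snd p)) (fst p) -
         Derive (fun t => beta (t, snd p)) (fst p) * Derive (fun t => u (fst p, t)) (snd p))).
      { unfold dy. ring. }
      unfold dy in *. rewrite Hpde. ring.
Qed.
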